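(* Let $k$ be an étale cubic algebra over $\mathbb{Q}$ and let $\mathcal{O}\subset\mathcal{O}_k$ be a cubic ring contained in $k$ such that the index $f=(\mathcal{O}_k:\mathcal{O})$ is square free. Then there exists a normalized basis $\{1,\omega,\theta\}$ of $\mathcal{O}_k$ such that $\mathcal{O}=[1,f\omega,\theta]$ and $\mathfrak{f}=[f,f\omega,\theta]$ is the conductor of $\mathcal{O}$. In particular $\mathcal{O}=\mathbb{Z}+\mathfrak{f}$ and $N(\mathfrak{f})=f^2$.
   Context: An étale cubic algebra is a direct sum of number fields of total degree $3$ over $\mathbb{Q}$; $\mathcal{O}_k$ is its maximal order. A cubic ring is a commutative ring with unit, free of rank $3$ as a $\mathbb{Z}$-module. A $\mathbb{Z}$-basis $\{1,\omega,\theta\}$ of a cubic ring is normalized if $\omega\theta\in\mathbb{Z}$. $[\beta_1,\beta_2,\beta_3]$ denotes the $\mathbb{Z}$-module generated by $\beta_1,\beta_2,\beta_3$. The conductor of $\mathcal{O}$ is the largest $\mathcal{O}_k$-ideal contained in $\mathcal{O}$; $N(\mathfrak{f})=(\mathcal{O}_k:\mathfrak{f})$. *)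

(* Defs.v *)
From HB Require Import structures.
From mathcomp Require Import all_boot all_order all_algebra all_field.
Set Implicit Arguments. Unset Strict Implicit. Unset Printing Implicit Defensive.
Import Order.TTheory GRing.Theory Num.Theory.
Local Open Scope ring_scope.

Definition kset (k : Type) := k -> Prop.

Section Cubic.
Variable k : falgType rat.

(* An etale cubic algebra over Q: commutative, of dimension 3, reduced
   (in characteristic 0 a finite commutative algebra is etale, i.e. a
   finite product of number fields, iff it is reduced). *)
Definition etale_cubic : Prop :=
  [/\ (forall x y : k, x * y = y * x),
      \dim (fullv : {vspace k}) = 3%N &
      (forall x : k, x ^+ 2 = 0 -> x = 0)].

Definition zspan3 (b1 b2 b3 : k) : kset k :=
  fun x => exists a1 a2 a3 : int, x = b1 *~ a1 + b2 *~ a2 + b3 *~ a3.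

Definition zfree3 (b1 b2 b3 : k) : Prop :=
  forall a1 a2 a3 : int, b1 *~ a1 + b2 *~ a2 + b3 *~ a3 = 0 ->
    [/\ a1 = 0, a2 = 0 & a3 = 0].

Definition kseteq (A B : kset k) : Prop := forall x, A x <-> B x.
Definition ksubset (A B : kset k) : Prop := forall x, A x -> B x.

Definition zbasis3 (A : kset k) (b1 b2 b3 : k) : Prop :=
  kseteq A (zspan3 b1 b2 b3) /\ zfree3 b1 b2 b3.

Definition cubic_ring (O : kset k) : Prop :=
  [/\ O 1, (forall x y, O x -> O y -> O (x - y)),
      (forall x y, O x -> O y -> O (x * y)) &
      exists b1 b2 b3, zbasis3 O b1 b2 b3].

Definition integral_Z (x : k) : Prop :=
  exists p : {poly int}, p \is monic /\ root (map_poly intr p) x.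

Definition maxorder : kset k := integral_Z.

(* (A : B) = n : the subgroup B of A has index n in A (B has exactly n
   cosets in A, represented by the entries of s). *)
Definition has_index (A B : kset k) (n : nat) : Prop :=
  exists s : seq k,
    [/\ size s = n,
        (forall i, (i < n)%N -> A (nth 0 s i)),
        (forall i j, (i < n)%N -> (j < n)%N -> B (nth 0 s i - nth 0 s j) -> i = j) &
        (forall x, A x -> exists2 i, (i < n)%N & B (x - nth 0 s i))].

Definition ideal_of (R I : kset k) : Prop :=
  [/\ ksubset I R, I 0, (forall x y, I x -> I y -> I (x - y)) &
      (forall r x, R r -> I x -> I (r * x))].

Definition is_conductor (O C : kset k) : Prop :=
  [/\ ideal_of maxorder C, ksubset C O &
      forall I, ideal_of maxorder I -> ksubset I O -> ksubset I C].

Definition normalized (w t : k) : Prop := exists c : int, w * t = c%:~R.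

Definition Zplus (A : kset k) : kset k :=
  fun x => exists2 n : int, True & exists2 y, A y & x = n%:~R + y.

End Cubic.

Definition squarefree (n : nat) : Prop :=
  forall p, prime p -> ~~ (p ^ 2 %| n)%N.
Arguments maxorder k : clear implicits.

(* Main.v *)
Require Import Defs.
From HB Require Import structures.
From mathcomp Require Import all_boot all_order all_algebra all_field.
From mathcomp Require Import ring zify.
Import GRing.Theory Num.Theory.
Local Open Scope ring_scope.
Set Implicit Arguments. Unset Strict Implicit. Unset Printing Implicit Defensive.

Lemma Ok_rat (k : falgType rat) (x : k) (g a : int) : g != 0 -> integral_Z x ->
  x *~ g = a%:~R -> exists m : int, a = m * g /\ x = m%:~R.
Proof.
move=> g0 [p [mp rp]] hxg.
have hx : x = (a%:~R / g%:~R : rat)%:A.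
  apply: (@scalerI rat k (g%:~R : rat)); first by rewrite intr_eq0.
  rewrite scalerA mulrCA mulfV ?intr_eq0 // mulr1 scaler_int hxg.
  by rewrite -scaler_int.
set r := (a%:~R / g%:~R : rat) in hx.
have hq : map_poly (intr : int -> k) p = map_poly (in_alg k) (map_poly (intr : int -> rat) p).
  rewrite -map_poly_comp; apply: eq_map_poly => n /=.
  by rewrite -scaler_int.
have rr : root (map_poly (intr : int -> rat) p) r.
  move: rp; rewrite hq hx /root horner_map /= => /eqP h.
  by move: h => /eqP; rewrite scaler_eq0 oner_eq0 orbF.
have hA : ratr r \in Aint.
  apply: (root_monic_Aint (p := map_poly (intr : int -> algC) p)).
  - have -> : map_poly (intr : int -> algC) p = map_poly ratr (map_poly (intr : int -> rat) p).
      rewrite -map_poly_comp; apply: eq_map_poly => n /=; by rewrite rmorph_int.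
    by rewrite fmorph_root.
  - exact: monic_map.
  - apply/polyOverP => i; rewrite coef_map /=; exact: rpred_int.
have /intrP [m hm] := Cint_rat_Aint (Crat_rat r) hA.
have hrm : r = m%:~R by apply: (fmorph_inj (ratr : {rmorphism rat -> algC})); rewrite /= hm rmorph_int.
exists m; split.
  apply: (@intr_inj rat); rewrite rmorphM /= -hrm /r mulfVK // intr_eq0 //.
by rewrite hx hrm scaler_int.
Qed.
Section Main.
Variable k : falgType rat.
Hypothesis kC : commutative (@GRing.mul k).
Definition kc : Type := k.
HB.instance Definition _ := GRing.NzRing.on kc.
HB.instance Definition _ := GRing.PzRing_hasCommutativeMul.Build kc kC.

Local Notation Ok := (maxorder k).

Lemma OkE (x : kc) : Ok x <-> integralOver (intr : int -> kc) x.
Proof.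
rewrite /maxorder /integral_Z /integralOver; split; case=> p.
  by case=> hm hr; exists p; [exact hm | exact hr].
by move=> hm hr; exists p; split; [exact hm | exact hr].
Qed.

Lemma Ok_sub (x y : kc) : Ok x -> Ok y -> Ok (x - y).
Proof. move=> /OkE hx /OkE hy; apply/OkE; exact: integral_sub. Qed.
Lemma Ok_add (x y : kc) : Ok x -> Ok y -> Ok (x + y).
Proof. move=> /OkE hx /OkE hy; apply/OkE; exact: integral_add. Qed.
Lemma Ok_mul (x y : kc) : Ok x -> Ok y -> Ok (x * y).
Proof. move=> /OkE hx /OkE hy; apply/OkE; exact: integral_mul. Qed.
Lemma Ok_int (n : int) : Ok (n%:~R : kc).
Proof. apply/OkE; have := integral_id (intr : {rmorphism int -> kc}) n; by []. Qed.
Lemma Ok_mulz (x : kc) n : Ok x -> Ok (x *~ n).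
Proof. move=> hx; rewrite -mulrzr; apply: Ok_mul hx (Ok_int n). Qed.
Lemma Ok_muln (x : kc) (n : nat) : Ok x -> Ok (x *+ n).
Proof. move=> hx; rewrite -mulrz_nat; exact: Ok_mulz. Qed.

Lemma Ok_rat' (x : kc) (g a : int) : g != 0 -> Ok x ->
  x *~ g = a%:~R -> exists m : int, a = m * g /\ x = m%:~R.
Proof. exact: (@Ok_rat k). Qed.

Lemma Ok_ratn (x : kc) (g : nat) (a : int) : (0 < g)%N -> Ok x ->
  x *+ g = a%:~R -> exists m : int, a = m * g%:Z /\ x = m%:~R.
Proof. move=> g0 hx h; apply: Ok_rat' hx _ => //; first lia. Qed.

Lemma tfree (x : kc) (g : nat) : (0 < g)%N -> x *+ g = 0 -> x = 0.
Proof.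
move=> g0 h; have : (g%:R : rat) *: (x : k) = 0 by rewrite scaler_nat.
move/eqP; rewrite scaler_eq0 pnatr_eq0 => /orP [/eqP g00|/eqP //]; by rewrite g00 in g0.
Qed.

Definition comb n (b : 'I_n -> kc) (c : 'rV[int]_n) : kc := \sum_i b i *~ c 0 i.
Definition chb n (P : 'M[int]_n) (b : 'I_n -> kc) : 'I_n -> kc := fun i => comb b (row i P).

Lemma comb_chb n (P : 'M[int]_n) b c : comb (chb P b) c = comb b (c *m P).
Proof.
rewrite /comb /chb.
under eq_bigr => i _ do rewrite mulrz_suml.
rewrite exchange_big /=; apply: eq_bigr => j _.
rewrite !mxE mulrz_sumr; apply: eq_bigr => i _.
by rewrite !mxE -mulrzA mulrC.
Qed.

Lemma combD n (b : 'I_n -> kc) c1 c2 : comb b (c1 + c2) = comb b c1 + comb b c2.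
Proof. by rewrite /comb -big_split; apply: eq_bigr => i _; rewrite mxE mulrzDr. Qed.
Lemma combN n (b : 'I_n -> kc) c : comb b (- c) = - comb b c.
Proof. by rewrite /comb -sumrN; apply: eq_bigr => i _; rewrite mxE mulrNz. Qed.
Lemma combB n (b : 'I_n -> kc) c1 c2 : comb b (c1 - c2) = comb b c1 - comb b c2.
Proof. by rewrite combD combN. Qed.
Lemma combZ n (b : 'I_n -> kc) (a : int) c : comb b (a *: c) = comb b c *~ a.
Proof. by rewrite /comb mulrz_suml; apply: eq_bigr => i _; rewrite mxE mulrzA_C. Qed.
Lemma comb0 n (b : 'I_n -> kc) : comb b 0 = 0.
Proof. by rewrite /comb big1 // => i _; rewrite mxE mulr0z. Qed.
Lemma comb_recl n (b : 'I_n.+1 -> kc) c :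
  comb b c = b ord0 *~ c 0 ord0 + comb (fun i => b (lift ord0 i)) (\row_i c 0 (lift ord0 i)).
Proof. by rewrite /comb big_ord_recl; congr (_ + _); apply: eq_bigr => i _; rewrite mxE. Qed.

Lemma comb_span n (P : 'M[int]_n) b x : P \in unitmx ->
  (exists c, x = comb b c) <-> (exists c, x = comb (chb P b) c).
Proof.
move=> uP; split; case=> c ->.
  by exists (c *m invmx P); rewrite comb_chb -mulmxA mulVmx // mulmx1.
by exists (c *m P); rewrite comb_chb.
Qed.

Lemma comb_free n (P : 'M[int]_n) b : P \in unitmx ->
  (forall c, comb b c = 0 -> c = 0) -> (forall c, comb (chb P b) c = 0 -> c = 0).
Proof.
move=> uP h c; rewrite comb_chb => /h e.
by rewrite -[c]mulmx1 -(mulmxV uP) mulmxA e mul0mx.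
Qed.

Definition vec3 (b1 b2 b3 : kc) : 'I_3 -> kc := fun i => nth 0 [:: b1; b2; b3] i.
Definition row3 (a1 a2 a3 : int) : 'rV[int]_3 := \row_(i < 3) nth 0 [:: a1; a2; a3] i.

Lemma comb3 b1 b2 b3 c : comb (vec3 b1 b2 b3) c = b1 *~ c 0 0 + b2 *~ c 0 1 + b3 *~ c 0 2.
Proof.
rewrite /comb !big_ord_recl big_ord0 /vec3 /= addr0 addrA.
by congr (_ + _ + _); congr (_ *~ c 0 _); apply: val_inj.
Qed.

Lemma zspan3E b1 b2 b3 x : zspan3 b1 b2 b3 x <-> exists c, x = comb (vec3 b1 b2 b3) c.
Proof.
split.
  case=> a1 [a2 [a3 ->]]; exists (row3 a1 a2 a3); by rewrite comb3 !mxE.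
by case=> c ->; exists (c 0 0), (c 0 1), (c 0 2); rewrite comb3.
Qed.

Lemma zfree3E b1 b2 b3 : zfree3 b1 b2 b3 -> forall c, comb (vec3 b1 b2 b3) c = 0 -> c = 0.
Proof.
move=> h c; rewrite comb3 => /h [e1 e2 e3].
apply/rowP => i; rewrite mxE; case: i => [[|[|[|i]]] hi] //.
- by rewrite -e1; congr (c _ _); apply: val_inj.
- by rewrite -e2; congr (c _ _); apply: val_inj.
- by rewrite -e3; congr (c _ _); apply: val_inj.
Qed.

Variable O : kset k.
Hypothesis HO1 : O 1.
Hypothesis HOsub : forall x y : kc, O x -> O y -> O (x - y).
Hypothesis HOmul : forall x y : kc, O x -> O y -> O (x * y).
Hypothesis HOk : forall x : kc, O x -> Ok x.

Lemma O0 : O (0 : kc). Proof. by rewrite -(subrr (1 : kc)); apply: HOsub. Qed.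
Lemma Oopp (x : kc) : O x -> O (- x). Proof. by move=> h; rewrite -sub0r; apply: HOsub O0 h. Qed.
Lemma Oadd (x y : kc) : O x -> O y -> O (x + y).
Proof. move=> hx hy; have := HOsub hx (Oopp hy). by rewrite opprK. Qed.
Lemma Omuln (x : kc) (n : nat) : O x -> O (x *+ n).
Proof. by move=> h; elim: n => [|n IH]; [rewrite mulr0n; exact: O0 | rewrite mulrS; apply: Oadd]. Qed.
Lemma Omulz (x : kc) (n : int) : O x -> O (x *~ n).
Proof. by move=> h; case: n => n; [exact: Omuln | rewrite NegzE mulrNz; apply/Oopp/Omuln]. Qed.
Lemma Oint (n : int) : O (n%:~R : kc).
Proof. exact: Omulz. Qed.
Lemma Osum (I : finType) (F : I -> kc) : (forall i, O (F i)) -> O (\sum_i F i).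
Proof. move=> h; apply: (big_ind O) => //; [exact: O0 | exact: Oadd]. Qed.

Variable f : nat.
Variable s : seq kc.
Hypothesis Hs1 : forall i, (i < f)%N -> Ok (nth 0 s i).
Hypothesis Hs2 : forall i j, (i < f)%N -> (j < f)%N -> O (nth 0 s i - nth 0 s j) -> i = j.
Hypothesis Hs3 : forall x : kc, Ok x -> exists2 i, (i < f)%N & O (x - nth 0 s i).

Lemma f_gt0 : (0 < f)%N.
Proof. have [i hi _] := Hs3 (Ok_int 0); lia. Qed.

Lemma lagrange (x : kc) : Ok x -> O (x *+ f).
Proof.
move=> hx.
have : forall i : 'I_f, exists j : 'I_f, O (x + nth 0 s i - nth 0 s j).
  move=> i; have [j hj hO] := Hs3 (Ok_add hx (Hs1 (ltn_ord i))).
  by exists (Ordinal hj).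
case/fin_all_exists => sg hsg.
have sg_inj : injective sg.
  move=> i i' e; apply/val_inj; apply: Hs2; [exact: ltn_ord | exact: ltn_ord |].
  have := HOsub (hsg i) (hsg i'); rewrite e.
  set a := nth 0 s i; set b := nth 0 s i'; set c := nth 0 s (sg i').
  suff -> : a - b = (x + a - c) - (x + b - c) by []. ring.
have hsum := Osum hsg.
rewrite sumrB big_split /= sumr_const card_ord in hsum.
have es : \sum_(i < f) nth 0 s (sg i) = \sum_(i < f) nth 0 s i.
  by symmetry; apply: (reindex_inj sg_inj).
by rewrite es addrK in hsum.
Qed.

Lemma comb_cons (b : 'I_3 -> kc) (a : int) (c : 'rV[int]_2) :
  comb b (row_mx (\row_(j < 1) a) c : 'rV_3) = b ord0 *~ a + comb (fun i => b (lift ord0 i)) c.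
Proof.
rewrite comb_recl; congr (_ + _).
  have -> : (ord0 : 'I_3) = lshift 2 (ord0 : 'I_1) by apply: val_inj.
  by rewrite (@row_mxEl _ 1 1 2 (\row_(j<1) a) c 0 ord0) mxE.
congr (comb _ _); apply/rowP => i; rewrite mxE.
have -> : lift ord0 i = rshift 1 i :> 'I_3 by apply: val_inj.
by rewrite (@row_mxEr _ 1 1 2 (\row_(j<1) a) c 0 i).
Qed.

Variables b1 b2 b3 : kc.
Hypothesis HOb : zbasis3 O b1 b2 b3.

Lemma basis1 : exists uv : 'I_2 -> kc,
  (forall x : kc, O x <-> exists (a : int) (c : 'rV[int]_2), x = a%:~R + comb uv c) /\
  (forall (a : int) c, a%:~R + comb uv c = 0 -> a = 0 /\ c = 0).
Proof.
set b := vec3 b1 b2 b3.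
have hspan : forall x : kc, O x <-> exists c, x = comb b c.
  by move=> x; rewrite -zspan3E; exact: (proj1 HOb x).
have hfree := zfree3E (proj2 HOb).
have [c1 e1] : exists c, 1 = comb b c by apply/hspan.
have [L uL [R uR [d _ hS]]] := int_Smith_normal_form c1.
set e := chb R b.
have espan : forall x : kc, O x <-> exists c, x = comb e c.
  by move=> x; rewrite hspan; exact: comb_span.
have efree := comb_free uR hfree.
set g := L 0 0 * d`_0.
have h1 : 1 = e ord0 *~ g.
  rewrite e1 hS -comb_chb comb_recl -/e.
  have -> : \row_i (L *m \matrix_(i0, j) (d`_i0 *+ (i0 == j :> nat)) : 'M_(1,3)) 0 (lift ord0 i) = 0.
    apply/rowP => i; rewrite !mxE big_ord1 !mxE /=.
    by rewrite mulr0n mulr0.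
  rewrite comb0 addr0 /g; congr (_ *~ _).
  by rewrite !mxE big_ord1 !mxE /= mulr1n.
have g0 : g != 0.
  apply/eqP => g0; move: h1; rewrite g0 mulr0z => /eqP; by rewrite oner_eq0.
have Oe0 : O (e ord0) by apply/hspan; exists (row ord0 R).
have h1' : e ord0 *~ g = (1:int)%:~R by rewrite -h1.
have [m [hm he0]] := Ok_rat' g0 (HOk Oe0) h1'.
exists (fun i => e (lift ord0 i)); split.
  move=> x; rewrite espan; split.
    case=> c ->; exists (m * c 0 ord0); exists (\row_i c 0 (lift ord0 i)).
    by rewrite comb_recl he0 intrM mulrzr.
  case=> a [c ->]; exists (row_mx (\row_(j < 1) (a * g)) c).
  rewrite comb_cons; congr (_ + _).
  by rewrite mulrC mulrzA -h1.
move=> a c h.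
have : row_mx (\row_(j < 1) (a * g)) c = 0.
  apply: efree; rewrite comb_cons -h; congr (_ + _).
  by rewrite mulrC mulrzA -h1.
move/eqP; rewrite row_mx_eq0 => /andP [/eqP ha /eqP hc]; split => //.
have : (\row_(j < 1) (a * g)) 0 0 = 0 by rewrite ha mxE.
rewrite mxE => /eqP; rewrite mulf_eq0 (negPf g0) orbF => /eqP //.
Qed.

Section P2.
Variable uv : 'I_2 -> kc.
Hypothesis HOu : forall x : kc, O x <-> exists (a : int) (c : 'rV[int]_2), x = a%:~R + comb uv c.
Hypothesis HOf : forall (a : int) c, a%:~R + comb uv c = 0 -> a = 0 /\ c = 0.

Let i0 : 'I_2 := ord0.
Let i1 : 'I_2 := ord_max.
Definition row2 (x y : int) : 'rV[int]_2 := \row_(i < 2) nth 0 [:: x; y] i.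

Lemma comb2 (b : 'I_2 -> kc) c : comb b c = b i0 *~ c 0 i0 + b i1 *~ c 0 i1.
Proof.
rewrite /comb !big_ord_recl big_ord0 addr0; congr (_ + _ *~ c 0 _); first congr (b _); by apply: val_inj.
Qed.

Lemma row2E (x y : int) : row2 x y 0 i0 = x /\ row2 x y 0 i1 = y.
Proof. by rewrite !mxE. Qed.
Lemma row2E0 (x y : int) : row2 x y 0 i0 = x. Proof. by rewrite !mxE. Qed.
Lemma row2E1 (x y : int) : row2 x y 0 i1 = y. Proof. by rewrite !mxE. Qed.

Lemma Ouv j : O (uv j).
Proof.
apply/HOu; exists 0, (delta_mx 0 j); rewrite comb2 !mxE add0r.
by case: j => [[|[|j]] hj] //=; rewrite ?mulr1z ?mulr0z ?addr0 ?add0r; congr uv; apply: val_inj.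
Qed.

Definition Coord (z : kc) (a : int) (c : 'rV[int]_2) := z *+ f = a%:~R + comb uv c.
Definition Good (r : 'rV[int]_2) := exists z a, Ok z /\ Coord z a r.

Lemma Good0 : Good 0.
Proof. exists 0, 0; split; first exact: (Ok_int 0). by rewrite /Coord mul0rn comb0 addr0. Qed.
Lemma GoodD r1 r2 : Good r1 -> Good r2 -> Good (r1 + r2).
Proof.
case=> z1 [a1 [h1 e1]] [z2 [a2 [h2 e2]]]; exists (z1 + z2), (a1 + a2); split; first exact: Ok_add.
by rewrite /Coord mulrnDl e1 e2 combD intrD; ring.
Qed.
Lemma GoodZ (a : int) r : Good r -> Good (a *: r).
Proof.
case=> z [b [h e]]; exists (z *~ a), (b * a); split; first exact: Ok_mulz.
by rewrite /Coord -mulrzr -mulrnAl e combZ intrM -mulrzr; ring.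
Qed.
Lemma Good_sum (I : finType) (F : I -> 'rV[int]_2) : (forall i, Good (F i)) -> Good (\sum_i F i).
Proof. move=> h; apply: (big_ind Good) => //; [exact: Good0 | exact: GoodD]. Qed.

Lemma coords_s : exists AC : 'I_f -> int * 'rV[int]_2, forall i : 'I_f, Coord (nth 0 s i) (AC i).1 (AC i).2.
Proof.
have H : forall i : 'I_f, exists p : int * 'rV[int]_2, Coord (nth 0 s i) p.1 p.2.
  move=> i; have /HOu [a [c e]] := lagrange (Hs1 (ltn_ord i)).
  by exists (a, c).
exact: fin_all_exists H.
Qed.

Lemma split2 (j : 'I_2) : j = i0 \/ j = i1.
Proof. case: j => [[|[|j]] hj] //; [left | right]; exact: val_inj. Qed.

Lemma structure : exists (g0 g1 : kc) (d0 d1 : int) (z1 z2 : kc) (a1 a2 : int),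
 [/\ (forall x : kc, O x <-> exists a x0 y0 : int, x = a%:~R + g0 *~ x0 + g1 *~ y0),
     (forall a x0 y0 : int, a%:~R + g0 *~ x0 + g1 *~ y0 = 0 -> [/\ a = 0, x0 = 0 & y0 = 0]),
     (forall z : kc, Ok z -> exists a m0 m1 : int, z *+ f = a%:~R + g0 *~ (m0 * d0) + g1 *~ (m1 * d1)),
     Ok z1 /\ z1 *+ f = a1%:~R + g0 *~ d0 &
     Ok z2 /\ z2 *+ f = a2%:~R + g1 *~ d1] /\
   [/\ (d0 %| f%:Z)%Z, (d1 %| f%:Z)%Z & (d0 %| d1)%Z].
Proof.
have [AC hAC] := coords_s.
pose Sb := \matrix_(i < f, j < 2) (AC i).2 0 j.
pose S : 'M[int]_(2 + f, 2) := col_mx (f%:Z)%:M Sb.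
have rowf : forall j : 'I_2, comb uv (row j (f%:Z)%:M) = uv j *+ f.
  move=> j; rewrite comb2 !mxE !mulrb.
  by case: (split2 j) => ->; rewrite /= mulr0z ?addr0 ?add0r pmulrn.
have Hgood : forall y, Good (y *m S).
  move=> y; rewrite mulmx_sum_row; apply: Good_sum => i; apply: GoodZ.
  rewrite -(splitK i); case: (split i) => j /=.
    rewrite rowKu; exists (uv j), 0; split; first exact: HOk (Ouv j).
    by rewrite /Coord rowf add0r.
  rewrite rowKd; exists (nth 0 s j), (AC j).1; split; first exact: Hs1 (ltn_ord j).
  have -> : row j Sb = (AC j).2 by apply/rowP => l; rewrite !mxE.
  exact: hAC.
have Hall : forall z : kc, Ok z -> exists a y, Coord z a (y *m S).
  move=> z hz; have [i hi hO] := Hs3 hz.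
  have [o0 [oc eo]] := (proj1 (HOu _)) hO.
  exists ((AC (Ordinal hi)).1 + o0 * f%:Z), (row_mx oc (delta_mx 0 (Ordinal hi))).
  rewrite /Coord mul_row_col mul_mx_scalar -rowE.
  have -> : row (Ordinal hi) Sb = (AC (Ordinal hi)).2 by apply/rowP => l; rewrite !mxE.
  have := hAC (Ordinal hi); rewrite /Coord /= => e.
  have -> : z = nth 0 s i + (z - nth 0 s i) by rewrite addrC subrK.
  rewrite eo mulrnDl e combD combZ intrD intrM; ring.
have [L uL [R uR [d sd hS]]] := int_Smith_normal_form S.
set D := \matrix_(i, j) (d`_i *+ (i == j :> nat)) in hS.
pose Q := invmx R.
have hSQ : S *m Q = L *m D by rewrite hS -mulmxA mulmxV // mulmx1.
have hD : forall (w : 'rV[int]_(2 + f)) (l : 'I_2), (w *m D) 0 l = w 0 (lshift f l) * d`_l.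
  move=> w l; rewrite !mxE (bigD1 (lshift f l)) //= mxE eqxx mulr1n big1 ?addr0 // => i hi.
  rewrite mxE; case: eqP => e; last by rewrite mulr0n mulr0.
  by case/eqP: hi; apply: val_inj.
pose gm := chb R uv.
have hcomb : forall y, comb uv (y *m S) = comb gm (y *m L *m D).
  by move=> y; rewrite /gm comb_chb hS !mulmxA.
exists (gm i0), (gm i1), d`_0, d`_1.
have K2 : forall j : 'I_2, exists z a, Ok z /\ z *+ f = a%:~R + gm j *~ d`_j.
  move=> j; have [z [a [hz hc]]] := Hgood (delta_mx 0 (lshift f j) *m invmx L).
  exists z, a; split => //; rewrite hc hcomb mulmxKV // comb2 !hD !mxE.
  case: (split2 j) => -> /=; rewrite ?eqxx /= ?mulr1n ?mulr0n ?mul0r ?mul1r ?mulr0z ?addr0 //.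
  by rewrite add0r.
have [z1 [a1 [hz1 ez1]]] := K2 i0.
have [z2 [a2 [hz2 ez2]]] := K2 i1.
exists z1, z2, a1, a2; split; first split.
- move=> x; rewrite HOu; split.
    case=> a [c ->]; exists a, ((c *m Q) 0 i0), ((c *m Q) 0 i1).
    by rewrite -addrA -comb2 /gm comb_chb mulmxKV.
  case=> a [x0 [y0 ->]]; exists a, (row2 x0 y0 *m R).
  by rewrite -comb_chb comb2 row2E0 row2E1 addrA.
- move=> a x0 y0 h.
  have := HOf (a := a) (c := row2 x0 y0 *m R); rewrite -comb_chb comb2 row2E0 row2E1 addrA => /(_ h) [-> e].
  have : row2 x0 y0 = 0 by rewrite -[row2 _ _]mulmx1 -(mulmxV uR) mulmxA e mul0mx.
  move=> e2; have := row2E x0 y0; rewrite e2 !mxE; by case=> <- <-.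
- move=> z hz; have [a [y hc]] := Hall z hz.
  exists a, ((y *m L) 0 (lshift f i0)), ((y *m L) 0 (lshift f i1)).
  by rewrite hc hcomb comb2 !hD addrA.
- by [].
- by [].
have dvdf : forall l : 'I_2, (d`_l %| f%:Z)%Z.
  move=> l; pose y : 'rV[int]_(2 + f) := row_mx (row l R) 0.
  have e1 : y *m S *m Q = f%:Z *: delta_mx 0 l.
    rewrite /y mul_row_col mul0mx addr0 mul_mx_scalar -scalemxAl /Q.
    by rewrite -row_mul mulmxV // row1.
  have : (y *m S *m Q) 0 l = f%:Z by rewrite e1 !mxE !eqxx /=; lia.
  rewrite -mulmxA hSQ mulmxA hD => <-; exact: dvdz_mull.
split; [exact: (dvdf i0) | exact: (dvdf i1) |].
clear -sd; move: sd; case: d => [|x [|y r]] //=.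
by case/andP.
Qed.

End P2.


Lemma small_mult (u x e : int) : (`|u| < `|e|)%N -> u = x * e -> u = 0.
Proof.
move=> h1 h2; have h3 := abszM x e; rewrite -h2 in h3.
have [hx0|hx] := eqVneq x 0; first by rewrite h2 hx0 mul0r.
have : (0 < `|x|)%N by rewrite absz_gt0.
move=> h4; exfalso; move: h1; rewrite h3; move: h4; clear.
move: `|x|%N `|e|%N => a b; nia.
Qed.
Section P3.
Variables (g0 g1 : kc) (d0 d1 : int) (z1 z2 : kc) (a1 a2 : int).
Hypothesis Hspan : forall x : kc, O x <-> exists a x0 y0 : int, x = a%:~R + g0 *~ x0 + g1 *~ y0.
Hypothesis Hfree : forall a x0 y0 : int, a%:~R + g0 *~ x0 + g1 *~ y0 = 0 -> [/\ a = 0, x0 = 0 & y0 = 0].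
Hypothesis Hall : forall z : kc, Ok z -> exists a m0 m1 : int, z *+ f = a%:~R + g0 *~ (m0 * d0) + g1 *~ (m1 * d1).
Hypothesis Hz1 : Ok z1.
Hypothesis Ez1 : z1 *+ f = a1%:~R + g0 *~ d0.
Hypothesis Hz2 : Ok z2.
Hypothesis Ez2 : z2 *+ f = a2%:~R + g1 *~ d1.
Hypothesis Hd0 : (d0 %| f%:Z)%Z.
Hypothesis Hd1 : (d1 %| f%:Z)%Z.

Lemma Og0 : O g0. Proof. by apply/Hspan; exists 0, 1, 0; rewrite mulr0z mulr1z add0r addr0. Qed.
Lemma Og1 : O g1. Proof. by apply/Hspan; exists 0, 0, 1; rewrite !mulr0z mulr1z !add0r. Qed.

Let e0 := (f%:Z %/ d0)%Z.
Let e1 := (f%:Z %/ d1)%Z.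
Lemma he0 : e0 * d0 = f%:Z. Proof. exact: divzK. Qed.
Lemma he1 : e1 * d1 = f%:Z. Proof. exact: divzK. Qed.
Lemma e0_neq0 : e0 != 0.
Proof. apply/eqP => h; have := he0; rewrite h mul0r => /eqP; rewrite eq_sym; have := f_gt0; lia. Qed.
Lemma e1_neq0 : e1 != 0.
Proof. apply/eqP => h; have := he1; rewrite h mul0r => /eqP; rewrite eq_sym; have := f_gt0; lia. Qed.
Lemma d0_neq0 : d0 != 0.
Proof. apply/eqP => h; have := he0; rewrite h mulr0 => /eqP; rewrite eq_sym; have := f_gt0; lia. Qed.
Lemma d1_neq0 : d1 != 0.
Proof. apply/eqP => h; have := he1; rewrite h mulr0 => /eqP; rewrite eq_sym; have := f_gt0; lia. Qed.

Let E0 := `|e0|%N.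
Let E1 := `|e1|%N.
Let T := ('I_E0 * 'I_E1)%type.
Let xt (t : T) : kc := z1 *+ t.1 + z2 *+ t.2.

Lemma Oxt_diff (t t' : T) : O (xt t - xt t') -> t = t'.
Proof.
case: t t' => [i j] [i' j']; rewrite /xt /= => h.
pose u := (i%:Z - i'%:Z); pose v := (j%:Z - j'%:Z).
have e : z1 *+ i + z2 *+ j - (z1 *+ i' + z2 *+ j') = z1 *~ u + z2 *~ v.
  by rewrite /u /v !mulrzBr !pmulrn; ring.
rewrite e in h; have [a [x0 [y0 exy]]] := (proj1 (Hspan _)) h.
have : (a1 * u + a2 * v - a * f%:Z)%:~R + g0 *~ (d0 * u - x0 * f%:Z) + g1 *~ (d1 * v - y0 * f%:Z) = 0 :> kc.
  have h2 : (z1 *+ f) *~ u + (z2 *+ f) *~ v = (a%:~R + g0 *~ x0 + g1 *~ y0) *+ f.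
    by rewrite -exy !pmulrn; ring.
  rewrite Ez1 Ez2 in h2.
  have -> : (a1 * u + a2 * v - a * f%:Z)%:~R + g0 *~ (d0 * u - x0 * f%:Z) + g1 *~ (d1 * v - y0 * f%:Z) =
    ((a1%:~R + g0 *~ d0) *~ u + (a2%:~R + g1 *~ d1) *~ v) - (a%:~R + g0 *~ x0 + g1 *~ y0) *+ f :> kc.
    rewrite !pmulrn; ring.
  by rewrite h2 subrr.
case/Hfree => _ hu hv.
have hu' : d0 * u = d0 * (x0 * e0).
  by move/eqP: hu; rewrite subr_eq0 => /eqP ->; rewrite -he0; ring.
have hv' : d1 * v = d1 * (y0 * e1).
  by move/eqP: hv; rewrite subr_eq0 => /eqP ->; rewrite -he1; ring.
have u0 := small_mult _ (mulfI d0_neq0 hu').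
have v0 := small_mult _ (mulfI d1_neq0 hv').
have : u = 0 by apply: u0; rewrite /u /E0; move: (ltn_ord i) (ltn_ord i'); rewrite /E0; lia.
have : v = 0 by apply: v0; rewrite /v; move: (ltn_ord j) (ltn_ord j'); rewrite /E1; lia.
rewrite /u /v => hv0 hu0.
congr pair; apply: val_inj => /=; lia.
Qed.
Lemma count : (E0 * E1)%N = f.
Proof.
have H : forall t : T, exists n : 'I_f, O (xt t - nth 0 s n).
  move=> t; have hx : Ok (xt t) by apply: Ok_add; apply: Ok_muln.
  by have [n hn hO] := Hs3 hx; exists (Ordinal hn).
have [F hF] := fin_all_exists H.
have Finj : injective F.
  move=> t t' e; apply: Oxt_diff; have := HOsub (hF t) (hF t'); rewrite e.
  set w := nth 0 s (F t').
  suff -> : xt t - xt t' = (xt t - w) - (xt t' - w) by []. ring.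
have Fsurj : forall n : 'I_f, exists t, F t = n.
  move=> n; have [a [m0 [m1 ha]]] := Hall (Hs1 (ltn_ord n)).
  have i0 : (0 <= (m0 %% e0)%Z) by apply: modz_ge0; exact: e0_neq0.
  have j0 : (0 <= (m1 %% e1)%Z) by apply: modz_ge0; exact: e1_neq0.
  have hi : (`|(m0 %% e0)%Z| < E0)%N.
    have := ltz_mod m0 e0_neq0; rewrite /E0; lia.
  have hj : (`|(m1 %% e1)%Z| < E1)%N.
    have := ltz_mod m1 e1_neq0; rewrite /E1; lia.
  exists (Ordinal hi, Ordinal hj).
  have em0 := divz_eq m0 e0; have em1 := divz_eq m1 e1.
  move: em0 em1 i0 j0 hi hj; set q0 := (m0 %/ e0)%Z; set i := (m0 %% e0)%Z.
  set q1 := (m1 %/ e1)%Z; set j := (m1 %% e1)%Z => em0 em1 i0 j0 hi hj.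
  set y := nth 0 s n - xt (Ordinal hi, Ordinal hj) - g0 *~ q0 - g1 *~ q1.
  have hy : Ok y.
    apply: Ok_sub; [apply: Ok_sub; [apply: Ok_sub|] |]; rewrite ?Ok_mulz //; try exact: HOk Og0; try exact: HOk Og1.
    + exact: Hs1 (ltn_ord n).
    + by apply: Ok_add; apply: Ok_muln.
    + exact: Ok_mulz (HOk Og0).
    + exact: Ok_mulz (HOk Og1).
  have ey : y *+ f = (a - i * a1 - j * a2)%:~R.
    have -> : y *+ f = nth 0 s n *+ f - (z1 *+ f) *~ i - (z2 *+ f) *~ j
        - g0 *~ (q0 * (e0 * d0)) - g1 *~ (q1 * (e1 * d1)).
      have zi : forall x : kc, x *+ `|i|%N = x *~ i by move=> x; rewrite pmulrn gez0_abs.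
      have zj : forall x : kc, x *+ `|j|%N = x *~ j by move=> x; rewrite pmulrn gez0_abs.
      rewrite he0 he1 /y /xt /= !zi !zj !pmulrn; ring.
    rewrite ha Ez1 Ez2 em0 em1; ring.
  have [c [_ hc]] := Ok_ratn f_gt0 hy ey.
  have hO : O (nth 0 s n - xt (Ordinal hi, Ordinal hj)).
    have -> : nth 0 s n - xt (Ordinal hi, Ordinal hj) = y + g0 *~ q0 + g1 *~ q1 by rewrite /y; ring.
    rewrite hc; apply: Oadd; [apply: Oadd; [exact: Oint | ] | ]; apply: Omulz; [exact: Og0 | exact: Og1].
  have := Oadd hO (hF (Ordinal hi, Ordinal hj)).
  set w := nth 0 s _; set w' := nth 0 s (F _).
  have -> : w - xt (Ordinal hi, Ordinal hj) + (xt (Ordinal hi, Ordinal hj) - w') = w - w' by ring.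
  move/Hs2 => h; apply/val_inj; symmetry; apply: h; exact: ltn_ord.
have [G hG] := fin_all_exists Fsurj.
have Ginj : injective G by move=> n n' e; rewrite -(hG n) -(hG n') e.
apply/eqP; rewrite eqn_leq; apply/andP; split.
  by have := leq_card F Finj; rewrite card_prod !card_ord.
by have := leq_card G Ginj; rewrite card_prod !card_ord.
Qed.

Hypothesis Hsf : squarefree f.
Hypothesis Hd01 : (d0 %| d1)%Z.

Lemma d0_unit : `|d0|%N = 1%N.
Proof.
have h0 : (E0 * `|d0|)%N = f by rewrite /E0 -abszM he0.
have h1 : (E1 * `|d1|)%N = f by rewrite /E1 -abszM he1.
have hc := count.
have fp := f_gt0.
have hD : (`|d0| * `|d1|)%N = f by move: h0 h1 hc fp; clear; move: E0 E1 `|d0|%N `|d1|%N => *; nia.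
have /dvdnP [kk hk] : (`|d0| %| `|d1|)%N by [].
have hsq : (`|d0| ^ 2 %| f)%N by apply/dvdnP; exists kk; rewrite -hD hk; ring.
have hd0 : (0 < `|d0|)%N by rewrite absz_gt0 d0_neq0.
case: (ltngtP `|d0|%N 1) => // hgt; first by move: hd0 hgt; clear; lia.
have pp := pdiv_prime hgt.
have := Hsf pp; rewrite (dvdn_trans _ hsq) //.
by rewrite dvdn_exp2r // pdiv_dvd.
Qed.

Lemma d0sq : d0 * d0 = 1.
Proof. have := d0_unit; clear; move=> h; nia. Qed.

Lemma e1_unit : `|e1|%N = 1%N.
Proof.
have h0 : (E0 * `|d0|)%N = f by rewrite /E0 -abszM he0.
have h1 : (E1 * `|d1|)%N = f by rewrite /E1 -abszM he1.
have hc := count. have fp := f_gt0. have hu := d0_unit.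
rewrite -/E1; move: h0 h1 hc fp hu; clear; move: E0 E1 `|d0|%N `|d1|%N => *; nia.
Qed.

Lemma e1sq : e1 * e1 = 1.
Proof. have := e1_unit; clear; move=> h; nia. Qed.

Let om := z1 *~ d0.

Lemma ewf : om *+ f = (a1 * d0)%:~R + g0.
Proof.
have -> : om *+ f = (z1 *+ f) *~ d0 by rewrite /om !pmulrn; ring.
rewrite Ez1; transitivity ((a1 * d0)%:~R + g0 *~ (d0 * d0) : kc); first ring.
by rewrite d0sq mulr1z.
Qed.

Lemma partA (x : kc) : Ok x <-> exists a b c : int, x = a%:~R + om *~ b + g1 *~ c.
Proof.
split; last first.
  case=> a [b [c ->]]; apply: Ok_add; first apply: Ok_add.
  - exact: Ok_int.
  - by apply: Ok_mulz; apply: Ok_mulz.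
  - by apply: Ok_mulz; apply: HOk; exact: Og1.
move=> hx; have [a [m0 [m1 ha]]] := Hall hx.
set y := x - om *~ (m0 * d0) - g1 *~ (m1 * e1).
have hy : Ok y.
  apply: Ok_sub; [apply: Ok_sub => //|]; apply: Ok_mulz; [exact: Ok_mulz | exact: HOk Og1].
have ey : y *+ f = (a - m0 * a1)%:~R.
  have -> : y *+ f = x *+ f - (z1 *+ f) *~ (m0 * (d0 * d0)) - g1 *~ (m1 * (e1 * e1) * d1).
    rewrite /y /om !pmulrn -he1; ring.
  rewrite d0sq e1sq ha Ez1; ring.
have [c [_ hc]] := Ok_ratn f_gt0 hy ey.
exists c, (m0 * d0), (m1 * e1); rewrite -hc /y; ring.
Qed.

Lemma partB a b c : a%:~R + om *~ b + g1 *~ c = 0 -> [/\ a = 0, b = 0 & c = 0].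
Proof.
move=> h.
have : (a * f%:Z + a1 * d0 * b)%:~R + g0 *~ b + g1 *~ (c * f%:Z) = 0.
  have : (a%:~R + om *~ b + g1 *~ c) *+ f = 0 by rewrite h mul0rn.
  have -> : (a%:~R + om *~ b + g1 *~ c) *+ f = (a * f%:Z)%:~R + (om *+ f) *~ b + g1 *~ (c * f%:Z).
    by rewrite !pmulrn; ring.
  by rewrite ewf; move=> <-; ring.
case/Hfree => ha hb hc.
have fz : f%:Z != 0 by have := f_gt0; lia.
have c0 : c = 0 by move/eqP: hc; rewrite mulf_eq0 (negPf fz) orbF => /eqP.
rewrite hb mulr0 addr0 in ha.
have a0 : a = 0 by move/eqP: ha; rewrite mulf_eq0 (negPf fz) orbF => /eqP.
by [].
Qed.

Lemma partC (x : kc) : O x <-> exists a b c : int, x = a%:~R + (om *+ f) *~ b + g1 *~ c.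
Proof.
rewrite Hspan ewf; split.
  case=> a [x0 [y0 ->]]; exists (a - a1 * d0 * x0), x0, y0; ring.
case=> a [b [c ->]]; exists (a + a1 * d0 * b), b, c; ring.
Qed.

End P3.

Lemma zspanE (y1 y2 y3 x : kc) : zspan3 y1 y2 y3 x <-> exists n1 n2 n3 : int, x = y1 *~ n1 + y2 *~ n2 + y3 *~ n3.
Proof. by []. Qed.

Section P4.
Variables (w t : kc) (cc : int).
Hypothesis HA : forall x : kc, Ok x <-> exists a b c : int, x = a%:~R + w *~ b + t *~ c.
Hypothesis HB : forall a b c : int, a%:~R + w *~ b + t *~ c = 0 -> [/\ a = 0, b = 0 & c = 0].
Hypothesis HC : forall x : kc, O x <-> exists a b c : int, x = a%:~R + (w *+ f) *~ b + t *~ c.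
Hypothesis Hwt : w * t = cc%:~R.

Let C := zspan3 (f%:R : kc) (w *+ f) t.

Lemma HBeq a b c a' b' c' : a%:~R + w *~ b + t *~ c = a'%:~R + w *~ b' + t *~ c' :> kc ->
  [/\ a = a', b = b' & c = c'].
Proof.
move=> e; have : (a - a')%:~R + w *~ (b - b') + t *~ (c - c') = 0 :> kc.
  by rewrite -[0](subrr (a'%:~R + w *~ b' + t *~ c')) -{1}e; ring.
by case/HB => /eqP; rewrite subr_eq0 => /eqP -> /eqP; rewrite subr_eq0 => /eqP -> /eqP; rewrite subr_eq0 => /eqP ->.
Qed.

Lemma memO a b c : O (a%:~R + w *~ b + t *~ c) <-> (f%:Z %| b)%Z.
Proof.
split.
  case/HC => a' [b' [c' e]].
  have e' : a%:~R + w *~ b + t *~ c = a'%:~R + w *~ (b' * f%:Z) + t *~ c' :> kc by rewrite e !pmulrn; ring.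
  case: (HBeq e') => _ -> _; exact: dvdz_mull (dvdzz _).
case/dvdzP => b' ->; apply/HC; exists a, b', c; rewrite !pmulrn; ring.
Qed.

Lemma memC a b c : C (a%:~R + w *~ b + t *~ c) <-> (f%:Z %| a)%Z /\ (f%:Z %| b)%Z.
Proof.
rewrite /C zspanE; split.
  case=> a' [b' [c' e]].
  have e' : a%:~R + w *~ b + t *~ c = (a' * f%:Z)%:~R + w *~ (b' * f%:Z) + t *~ c' :> kc.
    by rewrite e !pmulrn; ring.
  by case: (HBeq e') => -> -> _; split; apply: dvdz_mull (dvdzz _).
case=> /dvdzP [a' ->] /dvdzP [b' ->]; exists a', b', c; rewrite !pmulrn; ring.
Qed.

Lemma Ot : O t. Proof. by apply/HC; exists 0, 0, 1; rewrite !mulr0z mulr1z !add0r. Qed.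
Lemma Ow : Ok w. Proof. by apply/HA; exists 0, 1, 0; rewrite !mulr0z mulr1z addr0 add0r. Qed.

Lemma CO x : C x -> O x.
Proof.
rewrite /C zspanE => -[a [b [c ->]]]; apply/HC; exists (a * f%:Z), b, c; rewrite !pmulrn; ring.
Qed.

Lemma w2 : exists p0 p1 p2 : int, w * w = p0%:~R + w *~ p1 + t *~ p2.
Proof. have /HA [p0 [p1 [p2 e]]] : Ok (w * w) by apply: Ok_mul; exact: Ow. by exists p0, p1, p2. Qed.

Lemma fcc : (f%:Z %| cc)%Z.
Proof.
have [p0 [p1 [p2 e]]] := w2.
have h : O (cc%:~R * w).
  have -> : cc%:~R * w = t *~ p0 + cc%:~R *~ p1 + (t * t) *~ p2.
    rewrite -Hwt; transitivity ((w * w) * t); first ring.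
    rewrite e; ring.
  apply: Oadd; [apply: Oadd|]; apply: Omulz; [exact: Ot | exact: Oint | exact: HOmul Ot Ot].
have e2 : cc%:~R * w = 0%:~R + w *~ cc + t *~ 0 by ring.
by rewrite e2 in h; move/memO: h.
Qed.
Lemma Gl (x : kc) : O x -> O (x * w) -> C x.
Proof.
move=> /HC [a [b [c ex]]] hxw.
have [p0 [p1 [p2 ew]]] := w2.
have e : x * w = (b * f%:Z * p0 + c * cc)%:~R + w *~ (a + b * f%:Z * p1) + t *~ (b * f%:Z * p2).
  rewrite ex; transitivity (w *~ a + (w * w) *~ (b * f%:Z) + (w * t) *~ c); first by rewrite !pmulrn; ring.
  rewrite ew Hwt; ring.
rewrite e in hxw; move/memO: hxw => h.
have hf : (f%:Z %| a)%Z.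
  have -> : a = (a + b * f%:Z * p1) - b * f%:Z * p1 by ring.
  apply: rpredB => //; apply: dvdz_mulr; exact: dvdz_mull (dvdzz _).
have ex' : x = a%:~R + w *~ (b * f%:Z) + t *~ c by rewrite ex !pmulrn; ring.
rewrite ex'; apply/memC; split => //; exact: dvdz_mull (dvdzz _).
Qed.

Lemma Owx (x : kc) : C x -> O (w * x).
Proof.
rewrite /C zspanE => -[a1' [a2' [a3' ex]]].
have [p0 [p1 [p2 ew]]] := w2.
have e : w * x = (a2' * f%:Z * p0 + a3' * cc)%:~R + w *~ (a1' * f%:Z + a2' * f%:Z * p1) + t *~ (a2' * f%:Z * p2).
  rewrite ex; transitivity (w *~ (a1' * f%:Z) + (w * w) *~ (a2' * f%:Z) + (w * t) *~ a3'); first by rewrite !pmulrn; ring.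
  rewrite ew Hwt; ring.
rewrite e; apply/memO; apply: rpredD; first exact: dvdz_mull (dvdzz _).
apply: dvdz_mulr; exact: dvdz_mull (dvdzz _).
Qed.

Lemma Kl (x r : kc) : C x -> Ok r -> O (r * x).
Proof.
move=> hx /HA [r0 [r1 [r2 ->]]].
have -> : (r0%:~R + w *~ r1 + t *~ r2) * x = x *~ r0 + (w * x) *~ r1 + (t * x) *~ r2 by ring.
apply: Oadd; [apply: Oadd|]; apply: Omulz; [exact: CO | exact: Owx | exact: HOmul Ot (CO hx)].
Qed.

Lemma C0 : C (0 : kc). Proof. by apply/zspanE; exists 0, 0, 0; rewrite !mulr0z !addr0. Qed.
Lemma Csub (x y : kc) : C x -> C y -> C (x - y).
Proof.
move=> /zspanE [a1' [a2' [a3' ->]]] /zspanE [b1' [b2' [b3' ->]]].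
by apply/zspanE; exists (a1' - b1'), (a2' - b2'), (a3' - b3'); ring.
Qed.
Lemma Cmul (r x : kc) : Ok r -> C x -> C (r * x).
Proof.
move=> hr hx; apply: Gl; first exact: Kl.
have -> : r * x * w = (r * w) * x by ring.
apply: Kl => //; apply: Ok_mul hr Ow.
Qed.
Lemma Cmax (I : kset k) : ideal_of (maxorder k) I -> ksubset I O -> ksubset I C.
Proof.
case=> _ _ _ hI hIO x hx; apply: Gl; first exact: hIO.
have e : forall y : kc, y * w = w * y by move=> y; ring.
rewrite e.
apply: hIO; apply: hI => //; exact: Ow.
Qed.

Lemma Cindex : has_index (maxorder k) C (f ^ 2)%N.
Proof.
have fp := f_gt0.
pose sq := mkseq (fun n => ((n %/ f)%:R + w *+ (n %% f)) : kc) (f ^ 2).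
exists sq; split.
- by rewrite size_mkseq.
- move=> i hi; rewrite nth_mkseq //; apply: Ok_add; last exact: Ok_muln Ow.
  by rewrite pmulrn; exact: Ok_int.
- move=> i j hi hj; rewrite !nth_mkseq // => h.
  have e : ((i %/ f)%:R + w *+ (i %% f) - ((j %/ f)%:R + w *+ (j %% f)) : kc) =
      ((i %/ f)%:Z - (j %/ f)%:Z)%:~R + w *~ ((i %% f)%:Z - (j %% f)%:Z) + t *~ 0.
    by rewrite !pmulrn; ring.
  rewrite e in h; case/memC: h => /dvdzP [q1 h1] /dvdzP [q2 h2].
  have ff : (f ^ 2)%N = (f * f)%N by rewrite expnS expn1.
  have hi' : (i %/ f < f)%N by rewrite ltn_divLR // -ff.
  have hj' : (j %/ f < f)%N by rewrite ltn_divLR // -ff.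
  have hi2 : (i %% f < f)%N by rewrite ltn_mod.
  have hj2 : (j %% f < f)%N by rewrite ltn_mod.
  have u1 := small_mult _ h1.
  have u2 := small_mult _ h2.
  have eq1 : (i %/ f)%:Z - (j %/ f)%:Z = 0.
    by apply: u1; move: (i %/ f)%N (j %/ f)%N hi' hj'; clear; move=> *; lia.
  have eq2 : (i %% f)%:Z - (j %% f)%:Z = 0.
    by apply: u2; move: (i %% f)%N (j %% f)%N hi2 hj2; clear; move=> *; lia.
  rewrite (divn_eq i f) (divn_eq j f); move: eq1 eq2; move: (i %/ f)%N (j %/ f)%N (i %% f)%N (j %% f)%N; clear; move=> *; lia.
- move=> x /HA [a [b [c ->]]].
  have fz : f%:Z != 0 by lia.
  have qa0 := modz_ge0 a fz; have qb0 := modz_ge0 b fz.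
  have qa1 := ltz_mod a fz; have qb1 := ltz_mod b fz.
  set qa := (a %% f%:Z)%Z in qa0 qa1; set qb := (b %% f%:Z)%Z in qb0 qb1.
  have ea := divz_eq a f%:Z; have eb := divz_eq b f%:Z.
  have hqb : (`|qb| < f)%N by lia.
  have hqa : (`|qa| < f)%N by lia.
  have hn : (`|qa| * f + `|qb| < f ^ 2)%N.
    rewrite expnS expn1; move: hqa hqb; clear; move: `|qa|%N `|qb|%N => *; nia.
  exists (`|qa| * f + `|qb|)%N => //.
  rewrite nth_mkseq //.
  rewrite divnMDl // divn_small // addn0 modnMDl modn_small //.
  have e : (a%:~R + w *~ b + t *~ c - ((`|qa|)%:R + w *+ `|qb|) : kc) =
    (a - qa)%:~R + w *~ (b - qb) + t *~ c.
    by rewrite !pmulrn !gez0_abs //; ring.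
  rewrite e; apply/memC; split; apply/dvdzP.
    by exists (a %/ f%:Z)%Z; rewrite {1}ea; ring.
  by exists (b %/ f%:Z)%Z; rewrite {1}eb; ring.
Qed.

Lemma P4final :
  [/\ zbasis3 (maxorder k) 1 w t, normalized w t, kseteq O (zspan3 1 (w *+ f) t) &
      is_conductor O C] /\
  kseteq O (Zplus C) /\ has_index (maxorder k) C (f ^ 2)%N.
Proof.
split; last split.
- split.
  + split.
      move=> x; rewrite HA zspanE; split; case=> a [b [c ->]]; by exists a, b, c.
    move=> a b c h; apply: HB; exact: h.
  + by exists cc.
  + move=> x; rewrite HC zspanE; split; case=> a [b [c ->]]; by exists a, b, c.
  + split.
    * split.
      - move=> x hx; apply: HOk; exact: CO.
      - exact: C0.
      - move=> x y; exact: Csub.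
      - move=> r x; exact: Cmul.
    * move=> x; exact: CO.
    * exact: Cmax.
- move=> x; split.
    case/HC => a [b [c ->]]; exists a => //; exists ((w *+ f) *~ b + t *~ c); last by rewrite addrA.
    by apply/zspanE; exists 0, b, c; rewrite mulr0z add0r.
  case=> n _ [y hy ->]; apply: Oadd; [exact: Oint | exact: CO].
- exact: Cindex.
Qed.

End P4.

Section Shift.
Variables (w0 t0 : kc).
Hypothesis HA0 : forall x : kc, Ok x <-> exists a b c : int, x = a%:~R + w0 *~ b + t0 *~ c.
Hypothesis HB0 : forall a b c : int, a%:~R + w0 *~ b + t0 *~ c = 0 -> [/\ a = 0, b = 0 & c = 0].
Hypothesis HC0 : forall x : kc, O x <-> exists a b c : int, x = a%:~R + (w0 *+ f) *~ b + t0 *~ c.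

Lemma shift_main : exists w t : kc,
  [/\ zbasis3 (maxorder k) 1 w t, normalized w t, kseteq O (zspan3 1 (w *+ f) t) &
      is_conductor O (zspan3 (f%:R : kc) (w *+ f) t)] /\
  kseteq O (Zplus (zspan3 (f%:R : kc) (w *+ f) t)) /\
  has_index (maxorder k) (zspan3 (f%:R : kc) (w *+ f) t) (f ^ 2)%N.
Proof.
have hw0 : Ok w0 by apply/HA0; exists 0, 1, 0; rewrite !mulr0z mulr1z addr0 add0r.
have ht0 : Ok t0 by apply/HA0; exists 0, 0, 1; rewrite !mulr0z mulr1z !add0r.
have [c0 [c1 [c2 ewt]]] := (proj1 (HA0 _)) (Ok_mul hw0 ht0).
exists (w0 - c2%:~R), (t0 - c1%:~R).
apply: (@P4final _ _ (c0 + c1 * c2)).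
- move=> x; rewrite HA0; split; case=> a [b [c ->]].
    by exists (a + c2 * b + c1 * c), b, c; ring.
  by exists (a - c2 * b - c1 * c), b, c; ring.
- move=> a b c h.
  have : (a - c2 * b - c1 * c)%:~R + w0 *~ b + t0 *~ c = 0 :> kc by rewrite -h; ring.
  by case/HB0 => e hb hc; split => //; move: e; rewrite hb hc; lia.
- move=> x; rewrite HC0; split; case=> a [b [c ->]].
    by exists (a + c2 * f%:Z * b + c1 * c), b, c; rewrite !pmulrn; ring.
  by exists (a - c2 * f%:Z * b - c1 * c), b, c; rewrite !pmulrn; ring.
- transitivity (w0 * t0 - w0 *~ c1 - t0 *~ c2 + (c1 * c2)%:~R); first ring.
  rewrite ewt; ring.
Qed.
End Shift.

Hypothesis Hsqf : squarefree f.

Lemma mainB : exists w t : kc,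
  [/\ zbasis3 (maxorder k) 1 w t, normalized w t, kseteq O (zspan3 1 (w *+ f) t) &
      is_conductor O (zspan3 (f%:R : kc) (w *+ f) t)] /\
  kseteq O (Zplus (zspan3 (f%:R : kc) (w *+ f) t)) /\
  has_index (maxorder k) (zspan3 (f%:R : kc) (w *+ f) t) (f ^ 2)%N.
Proof.
have [uv [HOu HOf]] := basis1.
have [g0 [g1 [d0 [d1 [z1 [z2 [a1 [a2 [[Hspan Hfree Hall [Hz1 Ez1] [Hz2 Ez2]] [Hd0 Hd1 Hd01]]]]]]]]]] := structure HOu HOf.
apply: shift_main.
- exact: (partA Hspan Hfree Hall Hz1 Ez1 Hz2 Ez2 Hd0 Hd1 Hsqf Hd01).
- exact: (partB Hspan Hfree Hall Hz1 Ez1 Hz2 Ez2 Hd0 Hd1 Hsqf Hd01).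
- exact: (partC Hspan Hfree Hall Hz1 Ez1 Hz2 Ez2 Hd0 Hd1 Hsqf Hd01).
Qed.

End Main.

Unset Implicit Arguments.
Theorem proposition2p4 (k : falgType rat) (O : kset k) (f : nat) :
  etale_cubic k ->
  cubic_ring O ->
  ksubset O (maxorder k) ->
  has_index (maxorder k) O f ->
  squarefree f ->
  exists w t : k,
    [/\ zbasis3 (maxorder k) 1 w t, normalized w t,
        kseteq O (zspan3 1 (w *+ f) t) &
        is_conductor O (zspan3 f%:R (w *+ f) t)] /\
    kseteq O (Zplus (zspan3 f%:R (w *+ f) t)) /\
    has_index (maxorder k) (zspan3 f%:R (w *+ f) t) (f ^ 2)%N.
Proof.
move=> [kC _ _] [HO1 HOsub HOmul [b1 [b2 [b3 HOb]]]] HOk [s [_ Hs1 Hs2 Hs3]] Hsf.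
exact: (mainB kC HO1 HOsub HOmul HOk Hs1 Hs2 Hs3 HOb Hsf).
Qed.
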